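(* Let $I\subset[n]$ and $m=\#I$. Then the map $$\mathbb Z_2^m\backslash\mathrm{SPI}_m\to\mathbb Z_2^n\backslash\Omega^I_n/(\mathbb Z_2^n\rtimes\mathfrak S_n),\qquad \tau\mapsto \mathbb Z_2^n\,h(\sigma_I)\begin{pmatrix}\tau&0\\0&\mathbf 1_{n-m}\\\mathbf 1_m&0\\0&0\end{pmatrix}(\mathbb Z_2^n\rtimes\mathfrak S_n)$$ is a well-defined bijection.
   Context: $\mathrm{SPP}_k$: $k\times k$ integer matrices with entries in $\{-1,0,1\}$ and at most one nonzero entry per row and column. $\mathrm{SPI}_m=\mathrm{SPP}_m\cap\mathrm{Sym}_m(\mathbb Z)$; $\varepsilon=\mathrm{diag}(\varepsilon_1,\dots,\varepsilon_m)\in\mathbb Z_2^m=\{\pm1\}^m$ acts on $\mathrm{SPI}_m$ by $\tau\mapsto\varepsilon\tau\varepsilon$. $\Omega^\circ_n$ is the set of $\begin{pmatrix}\tau_1\\\tau_2\end{pmatrix}\in\mathrm M_{2n,n}(\mathbb Z)$ with $\tau_1,\tau_2\in\mathrm{SPP}_n$, $\tau_1^t\tau_2$ symmetric, of rank $n$. For $D\in\mathrm M_n$, $\mathrm{\acute{e}ch}\,D$ is the set of $i\in[n]$ such that the rows $i,\dots,n$ of $D$ have larger rank than rows $i+1,\dots,n$ (the pivot rows of a column echelon form of $D$). $\Omega^I_n=\{\begin{pmatrix}\tau_1\\\tau_2\end{pmatrix}\in\Omega^\circ_n:\mathrm{\acute{e}ch}\,\tau_2=I\}$. $\mathbb Z_2^n$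 acts on the left by $\mathrm{diag}(\varepsilon,\varepsilon)$ and $\mathbb Z_2^n\rtimes\mathfrak S_n$ (signed permutation matrices) by right multiplication; $\Omega^I_n$ is stable. For $I=\{i_1<\dots<i_m\}$, $[n]\setminus I=\{i'_1<\dots<i'_{n-m}\}$, $\sigma_I\in\mathfrak S_n$ sends $k\mapsto i_k$ ($k\le m$), $m+k\mapsto i'_k$, viewed as the permutation matrix with $\sigma e_i=e_{\sigma(i)}$, and $h(\sigma_I)=\mathrm{diag}(\sigma_I,\sigma_I)$. *)

(* Defs.v *)
From HB Require Import structures.
From mathcomp Require Import all_boot all_order all_algebra all_fingroup.
Set Implicit Arguments. Unset Strict Implicit. Unset Printing Implicit Defensive.
Import Order.TTheory GRing.Theory Num.Theory.
Local Open Scope ring_scope.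

(* Matrices are integer matrices; indices are 0-based: [n] = 'I_n. *)

Definition SPP (p q : nat) (A : 'M[int]_(p, q)) : bool :=
  [forall i, forall j, (A i j == 0) || (A i j == 1) || (A i j == -1)] &&
  [forall i, forall j, forall k, ((A i j != 0) && (A i k != 0)) ==> (j == k)] &&
  [forall j, forall i, forall k, ((A i j != 0) && (A k j != 0)) ==> (i == k)].

Definition SPI (m : nat) (t : 'M[int]_m) : bool := SPP t && (t^T == t).

(* signed permutation matrices = elements of Z_2^n ⋊ S_n:
   SPP matrices with exactly one nonzero entry in every row *)
Definition signed_perm (n : nat) (P : 'M[int]_n) : bool :=
  SPP P && [forall i, exists j, P i j != 0].

Definition sign_vec (n : nat) (e : 'rV[int]_n) : bool :=
  [forall i, (e 0 i == 1) || (e 0 i == -1)].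

Definition qrank (p q : nat) (A : 'M[int]_(p, q)) : nat :=
  \rank (map_mx (fun x : int => (x%:~R : rat)) A).

Definition rows_from (p q : nat) (D : 'M[int]_(p, q)) (i : nat) : 'M[int]_(p, q) :=
  \matrix_(j, k) (if (i <= j)%N then D j k else 0).

Definition ech (n : nat) (D : 'M[int]_n) : {set 'I_n} :=
  [set i : 'I_n | (qrank (rows_from D i.+1) < qrank (rows_from D i))%N].

Definition Omega0 (n : nat) (X : 'M[int]_(n + n, n)) : bool :=
  SPP (usubmx X) && SPP (dsubmx X) &&
  (((usubmx X)^T *m dsubmx X)^T == (usubmx X)^T *m dsubmx X) &&
  (qrank X == n).

Definition OmegaI (n : nat) (I : {set 'I_n}) (X : 'M[int]_(n + n, n)) : bool :=
  Omega0 X && (ech (dsubmx X) == I).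

(* Z_2^n \ . / (Z_2^n ⋊ S_n) double-coset relation: Y = diag(e,e) X P *)
Definition dcoset_rel (n : nat) (X Y : 'M[int]_(n + n, n)) : Prop :=
  exists (e : 'rV[int]_n) (P : 'M[int]_n),
    [/\ sign_vec e, signed_perm P &
        Y = block_mx (diag_mx e) 0 0 (diag_mx e) *m X *m P].

(* Z_2^m \ SPI_m orbit relation: t' = e t e *)
Definition sign_conj_rel (m : nat) (t t' : 'M[int]_m) : Prop :=
  exists e : 'rV[int]_m, sign_vec e /\ t' = diag_mx e *m t *m diag_mx e.

(* sigma_I : k -> i_k (k < m), m + k -> i'_k, with I = {i_0 < ... < i_{m-1}}
   and [n]\I = {i'_0 < ... }; enum over 'I_n is increasing. *)
Definition sigmaI (n : nat) (I : {set 'I_n}) (k : 'I_n) : 'I_n :=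
  if (k < #|I|)%N then nth k (enum I) k else nth k (enum (~: I)) (k - #|I|).

(* permutation matrix of sigma with sigma e_i = e_{sigma i} *)
Definition pmx (n : nat) (s : 'I_n -> 'I_n) : 'M[int]_n :=
  \matrix_(i, j) ((i == s j)%:R).

(* entry (i,j) of t : 'M_m, seen inside the top-left corner (0 outside) *)
Definition ext (m : nat) (t : 'M[int]_m) (i j : nat) : int :=
  match @insub nat (fun k => (k < m)%N) 'I_m i, @insub nat (fun k => (k < m)%N) 'I_m j with
  | Some i', Some j' => t i' j'
  | _, _ => 0
  end.

(* the 2n x n matrix  [[t, 0], [0, 1_{n-m}], [1_m, 0], [0, 0]] *)
Definition blockM (n m : nat) (t : 'M[int]_m) : 'M[int]_(n + n, n) :=
  col_mx
    (\matrix_(i < n, j < n)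
       (if (i < m)%N && (j < m)%N then ext t i j
        else ((m <= i)%N && (i == j :> nat))%:R))
    (\matrix_(i < n, j < n) (((i < m)%N && (i == j :> nat))%:R)).

Definition PhiI (n : nat) (I : {set 'I_n}) (t : 'M[int]_#|I|) : 'M[int]_(n + n, n) :=
  block_mx (pmx (sigmaI I)) 0 0 (pmx (sigmaI I)) *m blockM n t.

(* Main.v *)
Require Import Defs.
From mathcomp Require Import all_boot all_order all_algebra all_fingroup.
From mathcomp Require Import zify.
Set Implicit Arguments. Unset Strict Implicit. Unset Printing Implicit Defensive.
Import Order.TTheory GRing.Theory Num.Theory.
Local Open Scope ring_scope.
Set Warnings "-notation-overridden -ambiguous-paths".
Lemma SPPP p q (A : 'M[int]_(p,q)) : reflect
  [/\ forall i j, (A i j == 0) || (A i j == 1) || (A i j == -1),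
      forall i j k, A i j != 0 -> A i k != 0 -> j = k &
      forall j i k, A i j != 0 -> A k j != 0 -> i = k] (SPP A).
Proof.
rewrite /SPP; apply: (iffP idP).
  case/andP => /andP [/forallP h1 /forallP h2] /forallP h3; split.
  - by move=> i j; move/forallP: (h1 i) => /(_ j).
  - move=> i j k a b; move/forallP: (h2 i) => /(_ j) /forallP /(_ k) /implyP.
    by rewrite a b => /(_ isT) /eqP.
  - move=> j i k a b; move/forallP: (h3 j) => /(_ i) /forallP /(_ k) /implyP.
    by rewrite a b => /(_ isT) /eqP.
case => h1 h2 h3; apply/andP; split; [apply/andP; split|].
- by apply/forallP => i; apply/forallP => j; apply: h1.
- apply/forallP => i; apply/forallP => j; apply/forallP => k; apply/implyP.
  by case/andP => a b; apply/eqP; apply: h2 a b.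
- apply/forallP => j; apply/forallP => i; apply/forallP => k; apply/implyP.
  by case/andP => a b; apply/eqP; apply: h3 a b.
Qed.

Definition v3 (x : int) := (x == 0) || (x == 1) || (x == -1).

Lemma v3_sq x : v3 x -> x != 0 -> x * x = 1.
Proof. by rewrite /v3; case/orP => [/orP[]|] /eqP ->. Qed.

Lemma v3M x y : v3 x -> v3 y -> v3 (x * y).
Proof. by rewrite /v3; do 2 (case/orP => [/orP[]|] /eqP ->). Qed.

Lemma v3_pm x : v3 x -> x != 0 -> (x == 1) || (x == -1).
Proof. by rewrite /v3; case/orP => [/orP[]|] /eqP ->. Qed.

Lemma v3_pm' x : (x == 1) || (x == -1) -> v3 x.
Proof. by case/orP => /eqP ->. Qed.

Lemma v3_b (b : bool) : v3 (b%:R).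
Proof. by case: b. Qed.

Lemma pm_sq (x : int) : (x == 1) || (x == -1) -> x * x = 1.
Proof. by case/orP => /eqP ->. Qed.

Lemma pm_nz (x : int) : (x == 1) || (x == -1) -> x != 0.
Proof. by case/orP => /eqP ->. Qed.

Lemma sum_single (p : nat) (F : 'I_p -> int) k :
  (forall l, l != k -> F l = 0) -> \sum_l F l = F k.
Proof. by move=> h; rewrite (bigD1 k) //= big1 ?addr0 // => l /h. Qed.

Lemma b_nz (b : bool) : (b%:R : int) != 0 -> b.
Proof. by case: b. Qed.

Lemma ordeqE p (a b : 'I_p) : ((a : nat) == b) = (a == b).
Proof. by []. Qed.

Lemma ech_SPP n (D : 'M[int]_n) : SPP D -> ech D = [set i | [exists j, D i j != 0]].
Proof.
case/SPPP => h1 h2 h3; apply/setP => i; rewrite !inE /qrank.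
case: existsP => [[c hc]|hn].
- apply: rank_ltmx; rewrite ltmxE; apply/andP; split.
  + have -> : map_mx (fun x : int => (x%:~R : rat)) (rows_from D i.+1) =
       diag_mx (\row_r ((i < r)%N%:R)) *m map_mx (fun x : int => (x%:~R : rat)) (rows_from D i).
      apply/matrixP => r j; rewrite mul_diag_mx !mxE; case: (ltnP i r) => h.
        by rewrite (ltnW h) mul1r.
      by rewrite mul0r.
    exact: submxMl.
  + apply/negP => /(submx_trans (row_sub i _)) /submxP [u hu].
    have := congr1 (fun M : 'M[rat]_(1,n) => M 0 c) hu; rewrite !mxE leqnn big1 => [|r _].
      by move/eqP; rewrite intr_eq0 (negbTE hc).
    rewrite !mxE; case: ltnP => h; last by rewrite mulr0.
    have -> : D r c = 0.
      apply/eqP; apply/negP => /negP nz; have E := h3 _ _ _ nz hc.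
      by rewrite E ltnn in h.
    by rewrite mulr0.
- have -> : rows_from D i.+1 = rows_from D i; last by rewrite ltnn.
  apply/matrixP => r j; rewrite !mxE; case: (ltngtP i r) => h //.
  have /eqP Dz : D i j == 0 by apply/negPn/negP => nz; apply: hn; exists j.
  by move/ord_inj: h => <-; rewrite Dz.
Qed.

Lemma if_nz (c : bool) (x : int) : (if c then x else 0) != 0 -> c.
Proof. by case: c => //; rewrite eqxx. Qed.

Lemma signed_perm_diag n (e : 'rV[int]_n) : sign_vec e -> signed_perm (diag_mx e).
Proof.
move/forallP => he.
have dE i j : diag_mx e i j = if i == j then e 0 i else 0.
  by rewrite mxE; case: (i == j); rewrite /= ?mulr1n ?mulr0n.
apply/andP; split.
  apply/SPPP; split => [i j|i j k|j i k]; rewrite !dE.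
  - by case: (i == j) => /=; [apply: v3_pm'; exact: he| exact: v3_b false].
  - by move=> /if_nz/eqP <- /if_nz/eqP.
  - by move=> /if_nz/eqP -> /if_nz/eqP ->.
apply/forallP => i; apply/existsP; exists i; rewrite dE eqxx.
exact: pm_nz.
Qed.

Section Main.
Variable n : nat.
Variable I : {set 'I_n}.
Local Notation m := #|I|.
Local Notation sig := (sigmaI I).

Lemma m_le_n : (m <= n)%N.
Proof. by rewrite -[X in (_ <= X)%N]card_ord max_card. Qed.

Lemma cardCI : #|~: I| = (n - m)%N.
Proof. have := cardsC I; rewrite card_ord; lia. Qed.

Lemma sig_in k : (sig k \in I) = (k < m)%N.
Proof.
rewrite /sigmaI; case: ltnP => h.
  by rewrite -mem_enum mem_nth // -cardE.
have: (k - m < size (enum (~: I)))%N.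
  rewrite -cardE cardCI; have := ltn_ord k; have := m_le_n; lia.
move/(mem_nth k); rewrite mem_enum inE => /negbTE ->.
by [].
Qed.

Lemma sig_inj : injective sig.
Proof.
move=> a b E; have := sig_in a; rewrite E sig_in.
move: E; rewrite /sigmaI; case: ltnP => ha; case: ltnP => hb //= E _.
  apply: val_inj; have := congr1 (fun x => index x (enum I)) E.
  by rewrite !index_uniq ?enum_uniq // -cardE.
have := congr1 (fun x => index x (enum (~: I))) E.
rewrite !index_uniq ?enum_uniq // -?cardE ?cardCI.
- by move=> h; apply: ord_inj; move/(congr1 (addn^~ #|I|)): h; rewrite !subnK.
- by rewrite ltn_sub2r // (leq_ltn_trans hb).
- by rewrite ltn_sub2r // (leq_ltn_trans ha).
Qed.

Definition sp : {perm 'I_n} := perm sig_inj.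

Lemma sig_surj i : sig ((sp^-1)%g i) = i.
Proof. by have := permKV sp i; rewrite permE. Qed.

Lemma sp_sig k : (sp^-1)%g (sig k) = k.
Proof. by apply: (@perm_inj _ sp); rewrite permKV permE. Qed.

Lemma sig_inE i : (i \in I) = ((sp^-1)%g i < m)%N.
Proof. by rewrite -sig_in sig_surj. Qed.

Local Notation S := (pmx sig).

Lemma pmx_mulE p (A : 'M[int]_(n, p)) k j : (S *m A) (sig k) j = A k j.
Proof.
rewrite mxE (sum_single (k:=k)) => [|l lk]; first by rewrite mxE eqxx mul1r.
by rewrite mxE (inj_eq sig_inj) eq_sym (negbTE lk) mul0r.
Qed.

Lemma pmx_tmul : S^T *m S = 1%:M.
Proof.
apply/matrixP => i j; rewrite !mxE (sum_single (k:=(sig i))) => [|l li].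
  by rewrite !mxE eqxx mul1r (inj_eq sig_inj).
by rewrite !mxE (negbTE li) mul0r.
Qed.

Lemma SPP_S p (A : 'M[int]_(n, p)) : SPP A -> SPP (S *m A).
Proof.
case/SPPP => h1 h2 h3; apply/SPPP; split.
- by move=> i j; rewrite -(sig_surj i) pmx_mulE.
- by move=> i j k; rewrite -(sig_surj i) !pmx_mulE; apply: h2.
- move=> j i k; rewrite -(sig_surj i) -(sig_surj k) !pmx_mulE => a b.
  by rewrite (h3 _ _ _ a b).
Qed.

Lemma ext_ord (t : 'M[int]_m) (a b : 'I_m) : ext t a b = t a b.
Proof.
rewrite /ext; case: insubP => [a' _ /val_inj ->|]; last by rewrite ltn_ord.
by case: insubP => [b' _ /val_inj ->|]; last by rewrite ltn_ord.
Qed.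

Definition Up (t : 'M[int]_m) : 'M[int]_n :=
  \matrix_(i < n, j < n)
       (if (i < m)%N && (j < m)%N then ext t i j
        else ((m <= i)%N && (i == j :> nat))%:R).
Definition Lo : 'M[int]_n := \matrix_(i < n, j < n) (((i < m)%N && (i == j :> nat))%:R).

Lemma UpE_lt t (k j : 'I_n) (hk : (k < m)%N) (hj : (j < m)%N) :
  Up t k j = t (Ordinal hk) (Ordinal hj).
Proof. by rewrite mxE hk hj /= (ext_ord t (Ordinal hk) (Ordinal hj)). Qed.

Lemma UpE_klt t (k j : 'I_n) : (k < m)%N -> ~~ (j < m)%N -> Up t k j = 0.
Proof. by move=> hk /negbTE hj; rewrite mxE hk hj /= leqNgt hk. Qed.

Lemma UpE_ge t (k j : 'I_n) : ~~ (k < m)%N -> Up t k j = (k == j)%:R.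
Proof. by move=> hk; rewrite mxE (negbTE hk) /= leqNgt hk. Qed.

Lemma PhiE t : PhiI t = col_mx (S *m Up t) (S *m Lo).
Proof. by rewrite /PhiI mul_block_col !mul0mx addr0 add0r. Qed.

Lemma actE (e : 'rV[int]_n) (X : 'M[int]_(n + n, n)) (P : 'M[int]_n) :
  block_mx (diag_mx e) 0 0 (diag_mx e) *m X *m P =
  col_mx (diag_mx e *m usubmx X *m P) (diag_mx e *m dsubmx X *m P).
Proof. by rewrite -{1}(vsubmxK X) mul_block_col !mul0mx addr0 add0r mul_col_mx. Qed.

Lemma actent (e : 'rV[int]_n) (A P : 'M[int]_n) k j :
  (diag_mx e *m (S *m A) *m P) (sig k) j = e 0 (sig k) * (A *m P) k j.
Proof. by rewrite -!mulmxA mul_diag_mx mxE pmx_mulE. Qed.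


Lemma SPP_Up t : SPP t -> SPP (Up t).
Proof.
case/SPPP => h1 h2 h3; apply/SPPP; split.
- move=> i j; case: (ltnP i m) => hi; case: (ltnP j m) => hj.
  + rewrite (UpE_lt t hi hj); exact: h1.
  + by rewrite UpE_klt // -leqNgt.
  + by rewrite UpE_ge -?leqNgt //; exact: v3_b.
  + by rewrite UpE_ge -?leqNgt //; exact: v3_b.
- move=> i j k; case: (ltnP i m) => hi.
  + case: (ltnP j m) => hj; last by rewrite UpE_klt ?eqxx // -leqNgt.
    case: (ltnP k m) => hk; last by move=> _; rewrite UpE_klt ?eqxx // -leqNgt.
    rewrite (UpE_lt t hi hj) (UpE_lt t hi hk) => a b.
    by have := h2 _ _ _ a b => /(congr1 val) /= /ord_inj.
  + by rewrite !UpE_ge -?leqNgt // => /b_nz/eqP <- /b_nz/eqP.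
- move=> j i k; case: (ltnP j m) => hj.
  + case: (ltnP i m) => hi; last first.
      by rewrite UpE_ge -?leqNgt // => /b_nz/eqP E; move: hi; rewrite E leqNgt hj.
    case: (ltnP k m) => hk; last first.
      by move=> _; rewrite UpE_ge -?leqNgt // => /b_nz/eqP E; move: hk; rewrite E leqNgt hj.
    rewrite (UpE_lt t hi hj) (UpE_lt t hk hj) => a b.
    by have := h3 _ _ _ a b => /(congr1 val) /= /ord_inj.
  + case: (ltnP i m) => hi; first by rewrite UpE_klt ?eqxx // -leqNgt.
    case: (ltnP k m) => hk; first by move=> _; rewrite UpE_klt ?eqxx // -leqNgt.
    by rewrite !UpE_ge -?leqNgt // => /b_nz/eqP -> /b_nz/eqP.
Qed.

Lemma SPP_Lo : SPP Lo.
Proof.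
apply/SPPP; split => [i j|i j k|j i k]; rewrite ?mxE; first exact: v3_b.
- move=> /b_nz/andP[_ /eqP a] /b_nz/andP[_ /eqP b]; apply: ord_inj; by rewrite -a -b.
- move=> /b_nz/andP[_ /eqP a] /b_nz/andP[_ /eqP b]; apply: ord_inj; by rewrite a b.
Qed.

Lemma ULoE t i j : ((Up t)^T *m Lo) i j = if (i < m)%N && (j < m)%N then ext t j i else 0.
Proof.
rewrite !mxE (sum_single (k:=j)) => [|l lj]; last first.
  have lj' : ((l : nat) == j) = false by exact: negbTE lj.
  by rewrite !mxE lj' andbF mulr0.
rewrite !mxE eqxx andbT.
case hj: (j < m)%N; case hi: (i < m)%N => /=; rewrite ?mulr1 ?mulr0 //.
by rewrite leqNgt hj.
Qed.

Lemma sym_Phi t : t^T = t ->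
  ((S *m Up t)^T *m (S *m Lo))^T == (S *m Up t)^T *m (S *m Lo).
Proof.
move=> ht.
have -> : (S *m Up t)^T *m (S *m Lo) = (Up t)^T *m Lo.
  by rewrite trmx_mul -mulmxA (mulmxA S^T) pmx_tmul mul1mx.
apply/eqP/matrixP => i j; rewrite [LHS]mxE !ULoE andbC.
case hi: (i < m)%N; case hj: (j < m)%N => //=.
rewrite (ext_ord t (Ordinal hi) (Ordinal hj)) (ext_ord t (Ordinal hj) (Ordinal hi)).
by rewrite -{1}ht mxE.
Qed.

Lemma rank_Phi t : qrank (@PhiI n I t) = n.
Proof.
pose L' := row_mx (diag_mx (\row_i (~~ (i < m)%N)%:R) *m S^T)
                  (diag_mx (\row_i ((i < m)%N)%:R) *m S^T).
have hL : L' *m @PhiI n I t = 1%:M.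
  rewrite PhiE mul_row_col -!mulmxA !(mulmxA S^T) pmx_tmul !mul1mx !mul_diag_mx.
  apply/matrixP => i j; rewrite !mxE.
  case hi: (i < m)%N => /=; rewrite ?mul0r ?mul1r ?add0r ?addr0 //.
  by rewrite leqNgt hi.
have h := congr1 (map_mx (fun x : int => (x%:~R : rat))) hL.
rewrite map_mxM map_mx1 in h.
apply/eqP; rewrite eqn_leq rank_leq_col /=.
rewrite /qrank -{1}(mxrank1 rat n) -h; exact: mxrankM_maxr.
Qed.

Lemma part1 t : SPI t -> OmegaI I (@PhiI n I t).
Proof.
case/andP => hS /eqP hT.
rewrite /OmegaI /Omega0 PhiE col_mxKu col_mxKd -PhiE rank_Phi eqxx andbT.
rewrite SPP_S ?SPP_Up // SPP_S ?SPP_Lo // sym_Phi //=.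
rewrite ech_SPP ?SPP_S ?SPP_Lo //; apply/eqP/setP => i; rewrite !inE sig_inE.
apply/existsP/idP => [[j]|h].
  by rewrite -(sig_surj i) pmx_mulE mxE sp_sig => /b_nz/andP[].
by exists ((sp^-1)%g i); rewrite -[X in (_ *m _) X](sig_surj i) pmx_mulE mxE h eqxx.
Qed.
Definition extv (d : 'rV[int]_m) (k : nat) : int :=
  if (insub k : option 'I_m) is Some a then d 0 a else 1.

Lemma extv_ord d (a : 'I_m) : extv d a = d 0 a.
Proof. by rewrite /extv; case: insubP => [a' _ /val_inj ->|]; last by rewrite ltn_ord. Qed.

Lemma extv_ge d (k : nat) : ~~ (k < m)%N -> extv d k = 1.
Proof. by move=> h; rewrite /extv insubF //; apply/negbTE. Qed.

Lemma extv_pm d k : sign_vec d -> (extv d k == 1) || (extv d k == -1).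
Proof. by move/forallP => hd; rewrite /extv; case: insub. Qed.

Lemma aux_b d (k j : nat) : ~~ ((k < m)%N && (j < m)%N) ->
  ((m <= k)%N && (k == j))%:R = extv d k * (((m <= k)%N && (k == j))%:R * extv d j).
Proof.
move=> h; case hb: ((m <= k)%N && (k == j)); last by rewrite !mul0r mulr0.
by case/andP: hb => hm /eqP E; rewrite -E !extv_ge -?leqNgt // !mul1r.
Qed.

Lemma part2 t t' : sign_conj_rel t t' -> dcoset_rel (@PhiI n I t) (@PhiI n I t').
Proof.
case=> d [hd ->].
exists (\row_i extv d ((sp^-1)%g i)), (diag_mx (\row_j extv d j)); split.
- by apply/forallP => i; rewrite mxE; apply: extv_pm.
- by apply: signed_perm_diag; apply/forallP => i; rewrite mxE; apply: extv_pm.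
rewrite actE !PhiE col_mxKu col_mxKd; congr col_mx; apply/matrixP => i j;
  rewrite -(sig_surj i) pmx_mulE actent ?(mul_mx_diag (Up t)) ?(mul_mx_diag Lo) !mxE sp_sig;
  set k := (sp^-1)%g i.
  case hk: (k < m)%N; case hj: (j < m)%N => /=; try (by apply: aux_b; rewrite hk hj).
  have E1 : ext (diag_mx d *m t *m diag_mx d) k j =
    (diag_mx d *m t *m diag_mx d) (Ordinal hk) (Ordinal hj) := ext_ord _ (Ordinal hk) (Ordinal hj).
  have E2 : ext t k j = t (Ordinal hk) (Ordinal hj) := ext_ord t (Ordinal hk) (Ordinal hj).
  have E3 : extv d k = d 0 (Ordinal hk) := extv_ord d (Ordinal hk).
  have E4 : extv d j = d 0 (Ordinal hj) := extv_ord d (Ordinal hj).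
  rewrite E1 E2 E3 E4.
  by rewrite mul_mx_diag mul_diag_mx !mxE mulrA.
case hb: ((k < m)%N && (k == j :> nat)); last by rewrite !mul0r mulr0.
case/andP: hb => hk /eqP E; rewrite -E mul1r.
have E3 : extv d k = d 0 (Ordinal hk) := extv_ord d (Ordinal hk).
by rewrite E3 pm_sq //; move/forallP: hd.
Qed.

Lemma UpE_w t (a b : 'I_m) : Up t (widen_ord m_le_n a) (widen_ord m_le_n b) = t a b.
Proof. by rewrite mxE /= (ltn_ord a) (ltn_ord b) /=; exact: ext_ord. Qed.

Lemma part3 t t' : dcoset_rel (@PhiI n I t) (@PhiI n I t') -> sign_conj_rel t t'.
Proof.
case=> e [P [he hP]]; rewrite actE !PhiE col_mxKu col_mxKd => /eq_col_mx [hU hL].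
have epm k : (e 0 (sig k) == 1) || (e 0 (sig k) == -1) by move/forallP: he.
have LoP (k j : 'I_n) : (Lo *m P) k j = if (k < m)%N then P k j else 0.
  rewrite mxE (sum_single (k:=k)) => [|l lk].
    by rewrite mxE eqxx andbT; case: (k < m)%N; rewrite ?mul1r ?mul0r.
  have lk' : ((k : nat) == l) = false by rewrite eq_sym; exact: negbTE lk.
  by rewrite mxE lk' andbF mul0r.
have Pk (k j : 'I_n) : (k < m)%N -> P k j = e 0 (sig k) * ((k : nat) == j)%:R.
  move=> hk; have := congr1 (fun M : 'M[int]_n => M (sig k) j) hL.
  rewrite /= actent pmx_mulE LoP hk mxE hk /= => ->.
  by rewrite mulrA pm_sq ?mul1r.
have UP (k j : 'I_n) : (k < m)%N -> (j < m)%N -> (Up t *m P) k j = Up t k j * e 0 (sig j).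
  move=> hk hj; rewrite mxE (sum_single (k:=j)) => [|l lj].
    by rewrite Pk // eqxx mulr1.
  case: (ltnP l m) => hl.
    have lj' : ((l : nat) == j) = false by exact: negbTE lj.
    by rewrite Pk // lj' !mulr0.
  by rewrite UpE_klt ?mul0r // -leqNgt.
exists (\row_a e 0 (sig (widen_ord m_le_n a))); split.
  by apply/forallP => a; rewrite mxE.
apply/matrixP => a b; rewrite mul_mx_diag mul_diag_mx !mxE.
have := congr1 (fun M : 'M[int]_n => M (sig (widen_ord m_le_n a)) (widen_ord m_le_n b)) hU.
rewrite /= actent !pmx_mulE UP; [|exact: ltn_ord a|exact: ltn_ord b].
by move=> E; rewrite -(UpE_w t' a b) -(UpE_w t a b) -mulrA; exact: E.
Qed.
Lemma LoM (B : 'M[int]_n) (k j : 'I_n) : (Lo *m B) k j = if (k < m)%N then B k j else 0.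
Proof.
rewrite mxE (sum_single (k:=k)) => [|l lk].
  by rewrite mxE eqxx andbT; case: (k < m)%N; rewrite ?mul1r ?mul0r.
have lk' : ((k : nat) == l) = false by rewrite eq_sym; exact: negbTE lk.
by rewrite mxE lk' andbF mul0r.
Qed.

Lemma UpM_ge t (B : 'M[int]_n) (k j : 'I_n) : ~~ (k < m)%N -> (Up t *m B) k j = B k j.
Proof.
move=> hk; rewrite mxE (sum_single (k:=k)) => [|l lk].
  by rewrite UpE_ge // eqxx mul1r.
by rewrite UpE_ge // eq_sym (negbTE lk) mul0r.
Qed.

Lemma col_nz p (A : 'M[int]_(p, n)) : qrank A = n -> forall j, exists i, A i j != 0.
Proof.
move=> hr j; case: (pickP (fun i => A i j != 0)) => [i hi|h0]; first by exists i.
exfalso.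
pose B := (map_mx (fun x : int => (x%:~R : rat)) A)^T.
have hf : row_free B by rewrite /row_free mxrank_tr; move: hr; rewrite /qrank => ->.
have : row j B = 0.
  by apply/rowP => k; rewrite !mxE; move: (h0 k) => /negbFE /eqP ->.
rewrite rowE -(mul0mx _ B) => /(row_free_inj hf) /matrixP /(_ 0 j).
by rewrite !mxE !eqxx /= => /eqP; rewrite oner_eq0.
Qed.
Lemma part4 (X : 'M[int]_(n + n, n)) : OmegaI I X ->
  exists2 t : 'M[int]_m, SPI t & dcoset_rel (@PhiI n I t) X.
Proof.
case/andP => /andP [/andP [/andP [h1 h2] hsym] hr] /eqP hech.
move: (h1) (h2) => /SPPP [v1 r1 c1] /SPPP [v2 r2 c2].
set T1 := usubmx X in h1 hsym v1 r1 c1 *.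
set T2 := dsubmx X in h2 hsym hech v2 r2 c2 *.
have hI i : (i \in I) = [exists j, T2 i j != 0] by rewrite -hech ech_SPP // inE.
pose c i := odflt i [pick j | T2 i j != 0].
have hc i : i \in I -> T2 i (c i) != 0.
  rewrite hI => /existsP [j hj]; rewrite /c; case: pickP => [j' hj'|hn] //=.
  by rewrite hn in hj.
have hcu i j : i \in I -> T2 i j != 0 -> j = c i.
  by move=> hi hj; exact: r2 _ _ _ hj (hc i hi).
have T2z i j : i \notin I -> T2 i j = 0.
  move=> hi; apply/eqP; apply/negPn/negP => nz; move/negP: hi; apply.
  by rewrite hI; apply/existsP; exists j.
have cinj : {in I &, injective c}.
  move=> i i' hi hi' E; apply: (c2 (c i)) (hc i hi) _; rewrite E; exact: hc.
pose J := ~: (c @: I).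
have cJ i : i \in I -> c i \notin J by move=> hi; rewrite inE negbK; apply: imset_f.
have T2J i j : j \in J -> T2 i j = 0.
  move=> hj; apply/eqP; apply/negPn/negP => nz.
  have hi : i \in I by rewrite hI; apply/existsP; exists j.
  by move: hj; rewrite (hcu i j hi nz) (negbTE (cJ i hi)).
pose v i := T2 i (c i).
have Mc i j : i \in I -> (T1^T *m T2) j (c i) = T1 i j * v i.
  move=> hi; rewrite mxE (sum_single (k:=i)) => [|l li]; first by rewrite mxE.
  have -> : T2 l (c i) = 0.
    apply/eqP; apply/negPn/negP => nz; move/negP: li; apply; apply/eqP.
    exact: c2 nz (hc i hi).
  by rewrite mulr0.
have Msym a b : (T1^T *m T2) a b = (T1^T *m T2) b a.
  by move/eqP: hsym => /matrixP /(_ b a); rewrite mxE.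
have T1IJ i j : i \in I -> j \in J -> T1 i j = 0.
  move=> hi hj; have := Mc i j hi; rewrite Msym mxE big1 => [|l _]; last first.
    by rewrite (T2J l j hj) mulr0.
  move/esym/eqP; rewrite mulf_eq0 (negbTE (hc i hi)) orbF; exact/eqP.
have Xcol j : exists i, (T1 i j != 0) || (T2 i j != 0).
  have [i hi] := col_nz (eqP hr) j.
  move: hi; rewrite -[X]vsubmxK mxE; case: (split i) => k hk; exists k.
    by rewrite hk.
  by rewrite hk orbT.
pose r j := odflt j [pick i | T1 i j != 0].
have hr1 j : j \in J -> T1 (r j) j != 0.
  move=> hj; have [i] := Xcol j; rewrite (T2J i j hj) eqxx orbF => hi.
  rewrite /r; case: pickP => [i' hi'|hn] //=.
  by rewrite hn in hi.
have rI j : j \in J -> r j \notin I.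
  by move=> hj; apply/negP => hi; move: (hr1 j hj); rewrite T1IJ // eqxx.
have rinj : {in J &, injective r}.
  move=> j j' hj hj' E; apply: (r1 (r j)) (hr1 j hj) _; rewrite E; exact: hr1.
have cardJ : #|J| = (n - m)%N.
  have := cardsC (c @: I); rewrite card_ord (card_in_imset cinj) => h.
  by apply: (@addnI #|I|); rewrite subnKC ?m_le_n //; exact: h.
have RJ : r @: J = ~: I.
  apply/eqP; rewrite eqEcard; apply/andP; split.
    by apply/subsetP => i /imsetP [j hj ->]; rewrite inE; exact: rI.
  by rewrite (card_in_imset rinj) cardJ cardCI.
have hd i : i \notin I -> exists2 j, j \in J & T1 i j != 0.
  move=> hi; have : i \in r @: J by rewrite RJ inE.
  by case/imsetP => j hj ->; exists j => //; exact: hr1.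
pose d i := odflt i [pick j | (j \in J) && (T1 i j != 0)].
have hdJ i : i \notin I -> (d i \in J) && (T1 i (d i) != 0).
  move=> hi; have [j hj nz] := hd i hi; rewrite /d; case: pickP => [j' hj'|hn] //=.
  by move: (hn j); rewrite hj nz.
have vpm i : i \in I -> (v i == 1) || (v i == -1).
  by move=> hi; apply: v3_pm (v2 _ _) (hc i hi).
pose colP (k : 'I_n) := if (k < m)%N then c (sig k) else d (sig k).
have colPinj : injective colP.
  move=> k k'; rewrite /colP; case hk: (k < m)%N; case hk': (k' < m)%N => E.
  - have hkI : sig k \in I by rewrite sig_in.
    have hkI' : sig k' \in I by rewrite sig_in.
    exact: sig_inj (cinj _ _ hkI hkI' E).
  - have hkI : sig k \in I by rewrite sig_in.
    have hkI' : sig k' \notin I by rewrite sig_in hk'.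
    have /andP [hJ _] := hdJ _ hkI'.
    by move: (cJ _ hkI); rewrite E hJ.
  - have hkI : sig k \notin I by rewrite sig_in hk.
    have hkI' : sig k' \in I by rewrite sig_in.
    have /andP [hJ _] := hdJ _ hkI.
    by move: (cJ _ hkI'); rewrite -E hJ.
  - have hkI : sig k \notin I by rewrite sig_in hk.
    have hkI' : sig k' \notin I by rewrite sig_in hk'.
    have /andP [_ nz] := hdJ _ hkI; have /andP [_ nz'] := hdJ _ hkI'.
    rewrite E in nz; exact: sig_inj (c1 _ _ _ nz nz').
pose P : 'M[int]_n := \matrix_(k, j) (j == colP k)%:R.
pose e : 'rV[int]_n := \row_i (if i \in I then v i else T1 i (d i)).
pose w := widen_ord m_le_n.
have wI a : sig (w a) \in I by rewrite sig_in; exact: ltn_ord a.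
pose t : 'M[int]_m := \matrix_(a, b) (v (sig (w a)) * T1 (sig (w a)) (c (sig (w b)))).
have tE a b : t a b = v (sig (w a)) * T1 (sig (w a)) (c (sig (w b))) by exact: mxE.
have PE k j : P k j = (j == colP k)%:R by exact: mxE.
have eE i : e 0 i = (if i \in I then v i else T1 i (d i)) by exact: mxE.
clearbody t P e.
exists t.
  apply/andP; split.
    apply/SPPP; split.
    - move=> a b; rewrite tE; apply: v3M; [apply: v3_pm'; exact: vpm | exact: v1].
    - move=> a b b'; rewrite !tE !mulf_eq0 !negb_or => /andP [_ nz] /andP [_ nz'].
      have /sig_inj E := cinj _ _ (wI b) (wI b') (r1 _ _ _ nz nz').
      by apply: ord_inj; exact: (congr1 val E).
    - move=> b a a'; rewrite !tE !mulf_eq0 !negb_or => /andP [_ nz] /andP [_ nz'].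
      have /sig_inj E := c1 _ _ _ nz nz'.
      by apply: ord_inj; exact: (congr1 val E).
  apply/eqP/matrixP => a b; rewrite mxE !tE.
  by rewrite [LHS]mulrC [RHS]mulrC -!Mc // Msym.
exists e, P; split.
- apply/forallP => i; rewrite eE; case: ifP => hi; first exact: vpm.
  have /andP [_ nz] := hdJ i (negbT hi); exact: v3_pm (v1 _ _) nz.
- apply/andP; split.
    apply/SPPP; split => [k j|k j j'|j k k']; rewrite !PE.
    + exact: v3_b.
    + by move=> /b_nz/eqP -> /b_nz/eqP.
    + by move=> /b_nz/eqP E /b_nz/eqP E'; apply: colPinj; rewrite -E -E'.
  by apply/forallP => k; apply/existsP; exists (colP k); rewrite PE eqxx.
rewrite actE PhiE col_mxKu col_mxKd -[X in X = _]vsubmxK -/T1 -/T2.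
congr col_mx; apply/matrixP => i j; rewrite -(sig_surj i) actent;
  set k := (sp^-1)%g i; rewrite eE sig_in.
  case: (ltnP k m) => hk; last first.
    rewrite UpM_ge -?leqNgt // PE /colP ltnNge hk /=.
    have hkI : sig k \notin I by rewrite sig_in -leqNgt.
    have /andP [_ nz] := hdJ (sig k) hkI.
    case: (eqVneq j (d (sig k))) => [->|ne]; first by rewrite mulr1.
    rewrite mulr0; apply/eqP; apply/negPn/negP => nz'.
    by move/negP: ne; apply; apply/eqP; exact: r1 nz' nz.
  case: (boolP (j \in J)) => hj.
    rewrite T1IJ ?sig_in // [(Up t *m P) _ _]mxE big1 ?mulr0 // => l _.
    rewrite PE /colP; case: (ltnP l m) => hl; last by rewrite UpE_klt ?mul0r // -leqNgt.
    case: eqP => [E|]; last by rewrite mulr0.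
    by move: hj; rewrite E (negbTE (cJ _ _)) // sig_in.
  move: hj; rewrite inE negbK => /imsetP [i0 hi0 ->].
  set l0 := (sp^-1)%g i0.
  have hl0 : (l0 < m)%N by rewrite -sig_in sig_surj.
  rewrite [(Up t *m P) _ _]mxE (sum_single (k:=l0)) => [|l ll0]; last first.
    rewrite PE /colP; case: (ltnP l m) => hl; last by rewrite UpE_klt ?mul0r // -leqNgt.
    case: eqP => [E|]; last by rewrite mulr0.
    move: E; rewrite -{1}(sig_surj i0) -/l0 => /cinj; rewrite !sig_in => /(_ hl0 hl) /sig_inj E.
    by move/negP: ll0; rewrite E eqxx.
  rewrite PE /colP hl0 /l0 (sig_surj i0) eqxx mulr1 (UpE_lt t hk hl0) tE.
  have -> : w (Ordinal hk) = k by apply: ord_inj.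
  have -> : w (Ordinal hl0) = l0 by apply: ord_inj.
  by rewrite (sig_surj i0) mulrA pm_sq ?mul1r // vpm // sig_in.
rewrite LoM PE /colP.
case: (ltnP k m) => hk /=; last first.
  by rewrite mulr0 T2z // sig_in -leqNgt.
rewrite /v; case: (eqVneq j (c (sig k))) => [->|ne]; first by rewrite mulr1.
rewrite mulr0; apply/eqP; apply/negPn/negP => nz.
by move/negP: ne; apply; apply/eqP; apply: hcu; rewrite ?sig_in.
Qed.
End Main.

Theorem proposition5p3 (n : nat) (I : {set 'I_n}) :
  (* well-defined: lands in Omega^I_n and is constant on Z_2^m-orbits *)
  (forall t : 'M[int]_#|I|, SPI t -> OmegaI I (PhiI t)) /\
  (forall t t' : 'M[int]_#|I|, SPI t -> SPI t' ->
     sign_conj_rel t t' -> dcoset_rel (PhiI t) (PhiI t')) /\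
  (* injective on orbits *)
  (forall t t' : 'M[int]_#|I|, SPI t -> SPI t' ->
     dcoset_rel (PhiI t) (PhiI t') -> sign_conj_rel t t') /\
  (* surjective on double cosets *)
  (forall X : 'M[int]_(n + n, n), OmegaI I X ->
     exists2 t : 'M[int]_#|I|, SPI t & dcoset_rel (PhiI t) X).
Proof.
split; first by move=> t; exact: (@part1 n I t).
split; first by move=> t t' _ _; exact: (@part2 n I t t').
split; first by move=> t t' _ _; exact: (@part3 n I t t').
by move=> X; exact: (@part4 n I X).
Qed.
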